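(* Let $n\ge1$, $\mathcal{X}$ the simplex in $\mathbb{R}^{n+1}$, $\theta$ a kernel, $\Phi$ a Lipschitz continuous smooth function on an open neighborhood of $\mathcal{X}$, and $\eta>0$. Let $x(t)$ be an interior solution of the inertial dynamics (ID) defined for all $t\ge0$. Then the rate of change $\dot K(t)$ of the kinetic energy $K(t)=\frac12\|\dot x(t)\|^2$ is bounded from above for all $t\ge0$.
   Context: $\mathcal{X}=\{x\in\mathbb{R}^{n+1}:x_\alpha\ge0,\sum_\alpha x_\alpha=1\}$ with relative interior $\mathcal{X}^\circ$. A kernel is a $C^\infty$ function $\theta:[0,\infty)\to\mathbb{R}\cup\{+\infty\}$ with $\theta(x)<\infty$ for $x>0$, $\lim_{x\to0^+}\theta'(x)=-\infty$, $\theta''>0$, $\theta'''<0$ on $(0,\infty)$. The norm is $\|\dot x\|^2=\sum_\alpha\theta''(x_\alpha)\dot x_\alpha^2$. With $\theta''_\alpha=\theta''(x_\alpha)$, $\theta'''_\alpha=\theta'''(x_\alpha)$, $\Theta''=(\sum_\beta1/\theta''_\beta)^{-1}$, $v_\alpha=\partial\Phi/\partial x_\alpha$, the inertial dynamics (ID) on $\mathcal{X}^\circ$ are $$\ddot x_\alpha=\frac{1}{\theta''_\alpha}\Big[v_\alpha-\sum_{\beta}\frac{\Theta''}{\theta''_\beta}v_\beta\Big]-\frac{1}{2\theta''_\alpha}\Big[\theta'''_\alpha\dot x_\alpha^2-\sum_\beta\frac{\Theta''}{\theta''_\beta}\theta'''_\beta\dot x_\beta^2\Big]-\eta\dot x_\alpha.$$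 *)

(* Defs.v *)
From HB Require Import structures.
From mathcomp Require Import all_boot all_order all_algebra.
From mathcomp Require Import all_classical all_reals all_analysis.
Set Implicit Arguments. Unset Strict Implicit. Unset Printing Implicit Defensive.
Import Order.TTheory GRing.Theory Num.Theory.
Import numFieldNormedType.Exports.
Local Open Scope classical_set_scope.
Local Open Scope ring_scope.

Section Defs.
Variable R : realType.

(* A kernel theta : [0,oo) -> R u {+oo}.  Only its restriction to (0,oo),
   where it is finite, matters; we model it as a function R -> R whose
   values at x <= 0 are irrelevant. *)
Definition is_kernel (theta : R -> R) : Prop :=
  (forall (k : nat) (x : R), 0 < x -> derivable ((derive1n k theta)) x 1) /\
  ((derive1 theta) x @[x --> 0^'+] --> -oo) /\
  (forall x : R, 0 < x -> 0 < (derive1n 2 theta) x) /\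
  (forall x : R, 0 < x -> (derive1n 3 theta) x < 0).

Definition simplex (m : nat) : set 'rV[R]_m :=
  [set p | (forall a : 'I_m, 0 <= p ord0 a) /\ \sum_(a < m) p ord0 a = 1].
Definition simplex_int (m : nat) : set 'rV[R]_m :=
  [set p | (forall a : 'I_m, 0 < p ord0 a) /\ \sum_(a < m) p ord0 a = 1].

Definition evec (m : nat) (a : 'I_m) : 'rV[R]_m := delta_mx ord0 a.

Fixpoint iter_partial (m : nat) (l : seq 'I_m) (f : 'rV[R]_m -> R)
  : 'rV[R]_m -> R :=
  match l with
  | [::] => f
  | i :: l' => fun p => 'D_(evec i) (iter_partial l' f) p
  end.

Definition smooth_on (m : nat) (U : set 'rV[R]_m) (f : 'rV[R]_m -> R) : Prop :=
  forall (l : seq 'I_m) (p : 'rV[R]_m), U p ->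
    {for p, continuous (iter_partial l f)} /\
    forall i : 'I_m, derivable (iter_partial l f) p (evec i).

Definition pgrad (m : nat) (Phi : 'rV[R]_m -> R) (p : 'rV[R]_m) (a : 'I_m) : R :=
  'D_(evec a) Phi p.

Definition coord (m : nat) (x : R -> 'rV[R]_m) (a : 'I_m) : R -> R :=
  fun t => x t ord0 a.
Definition vel (m : nat) (x : R -> 'rV[R]_m) (a : 'I_m) : R -> R :=
  derive1 (coord x a).
Definition acc (m : nat) (x : R -> 'rV[R]_m) (a : 'I_m) : R -> R :=
  derive1n 2 (coord x a).

Definition ID_rhs (m : nat) (theta : R -> R) (Phi : 'rV[R]_m -> R) (eta : R)
  (x : R -> 'rV[R]_m) (t : R) (a : 'I_m) : R :=
  let th2 := fun b => (derive1n 2 theta) (coord x b t) in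
  let th3 := fun b => (derive1n 3 theta) (coord x b t) in
  let Th2 := (\sum_(b < m) (th2 b)^-1)^-1 in
  let v := pgrad Phi (x t) in
  (th2 a)^-1 * (v a - \sum_(b < m) Th2 / th2 b * v b)
  - (2 * th2 a)^-1 * (th3 a * (vel x a t) ^+ 2
                      - \sum_(b < m) Th2 / th2 b * th3 b * (vel x b t) ^+ 2)
  - eta * vel x a t.

Definition ID_interior_solution (m : nat) (theta : R -> R) (Phi : 'rV[R]_m -> R)
  (eta : R) (x : R -> 'rV[R]_m) : Prop :=
  forall t : R, 0 <= t ->
    @simplex_int m (x t) /\
    (forall a : 'I_m, derivable (coord x a) t 1 /\ derivable (vel x a) t 1) /\
    (forall a : 'I_m, acc x a t = ID_rhs theta Phi eta x t a).

Definition kinetic (m : nat) (theta : R -> R) (x : R -> 'rV[R]_m) : R -> R :=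
  fun t => 2^-1 * \sum_(a < m) (derive1n 2 theta) (coord x a t) * (vel x a t) ^+ 2.

End Defs.
Arguments simplex {R} m.
Arguments simplex_int {R} m.

(* Main.v *)
Require Import Defs.
From HB Require Import structures.
From mathcomp Require Import all_boot all_order all_algebra.
From mathcomp Require Import all_classical all_reals all_analysis.
From mathcomp Require Import ring lra.
Import Order.TTheory GRing.Theory Num.Theory.
Import numFieldNormedType.Exports.
Local Open Scope classical_set_scope.
Local Open Scope ring_scope.
From mathcomp Require Import ring lra.

Lemma comp_is_derive (R : realType) (g f : R -> R) t :
  derivable g (f t) 1 -> derivable f t 1 ->
  is_derive t 1 (g \o f) (derive1 g (f t) * derive1 f t).
Proof.
move=> dg df; apply: DeriveDef.
  apply/derivable1_diffP; apply: differentiable_comp; exact/derivable1_diffP.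
by rewrite -derive1E derive1_comp.
Qed.

Lemma term_derive (R : realType) (th : R -> R) (f : R -> R) t :
  derivable (derive1n 2 th) (f t) 1 -> derivable f t 1 ->
  derivable (derive1 f) t 1 ->
  is_derive t 1 (fun s => derive1n 2 th (f s) * derive1 f s ^+ 2)
    (derive1n 3 th (f t) * derive1 f t * derive1 f t ^+ 2 +
     derive1n 2 th (f t) * (2 * derive1 f t * derive1n 2 f t)).
Proof.
move=> d2 df ddf.
have h1 := @comp_is_derive _ (derive1n 2 th) f t d2 df.
have h2 : is_derive t 1 (derive1 f) (derive1n 2 f t).
  apply: DeriveDef; first exact: ddf.
  by rewrite derive1nS derive1n1 derive1E.
have h3 := is_deriveX 2 h2.
have h4 := is_deriveM h1 h3.
have E : (fun s => derive1n 2 th (f s) * derive1 f s ^+ 2) =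
   ((derive1n 2 th \o f) * derive1 f ^+ 2).
  by apply/funext => s; rewrite /= exprfctE.
rewrite E.
move: h4; set L := (_ + _) => h4.
suff <- : L = th^`(3)%classic (f t) * f^`()%classic t * f^`()%classic t ^+ 2 +
     th^`(2)%classic (f t) * (2 * f^`()%classic t * f^`(2)%classic t) by [].
rewrite /L -derive1nS.
change (th^`(2)%classic (f t) * ((2 * f^`()%classic t ^+ 1) * f^`(2)%classic t) +
  (f^`()%classic t ^+ 2) * (th^`(3)%classic (f t) * f^`()%classic t) = th^`(3)%classic (f t) * f^`()%classic t * f^`()%classic t ^+ 2 +
     th^`(2)%classic (f t) * (2 * f^`()%classic t * f^`(2)%classic t)).
rewrite expr1.
generalize (th^`(2)%classic (f t)) (th^`(3)%classic (f t)) (f^`()%classic t) (f^`(2)%classic t) => a b c d.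
ring.
Qed.

Lemma kin_derive (R : realType) m (theta : R -> R) (x : R -> 'rV[R]_m) t :
  (forall a, derivable (derive1n 2 theta) (Defs.coord x a t) 1) ->
  (forall a, derivable (Defs.coord x a) t 1 /\ derivable (vel x a) t 1) ->
  is_derive t 1 (kinetic theta x)
    (2^-1 * \sum_(a < m) (derive1n 3 theta (Defs.coord x a t) * vel x a t * vel x a t ^+ 2 +
       derive1n 2 theta (Defs.coord x a t) * (2 * vel x a t * acc x a t))).
Proof.
move=> d2 dd.
have hs : is_derive t 1 (\sum_(a < m) (fun s => derive1n 2 theta (Defs.coord x a s) * vel x a s ^+ 2))
   (\sum_(a < m) (derive1n 3 theta (Defs.coord x a t) * vel x a t * vel x a t ^+ 2 +
       derive1n 2 theta (Defs.coord x a t) * (2 * vel x a t * acc x a t))).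
  apply: is_derive_sum => a.
  have [h1 h2] := dd a.
  rewrite /vel /acc in h2 *.
  exact: (@term_derive _ theta (Defs.coord x a) t (d2 a) h1 h2).
have hz := is_deriveZ (2^-1 : R) hs.
have E : kinetic theta x = (2^-1 : R) *: (\sum_(a < m) (fun s => derive1n 2 theta (Defs.coord x a s) * vel x a s ^+ 2)).
  apply/funext => s; rewrite fct_sumE.
  by [].
rewrite E; exact: hz.
Qed.

Lemma th2_ge (R : realType) (th : R -> R) (y : R) :
  is_kernel th -> 0 < y -> y <= 1 -> derive1n 2 th 1 <= derive1n 2 th y.
Proof.
move=> [Hd [_ [_ H3]]] y0 y1.
have dpos : forall z, 0 < z -> derivable (derive1n 2 th) z 1 by move=> z z0; exact: Hd.
apply: (@ler0_derive1_nincr _ _ y 1) => //.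
- move=> z; rewrite in_itv /= => /andP[yz _]; apply: dpos; exact: lt_trans yz.
- move=> z; rewrite in_itv /= => /andP[yz _].
  change (derive1n 3 th z <= 0); apply/ltW/H3; exact: lt_trans yz.
- apply: continuous_in_subspaceT => z; rewrite inE /= in_itv /= => /andP[yz _].
  apply: differentiable_continuous; apply/derivable1_diffP; apply: dpos.
  exact: lt_le_trans yz.
Qed.

Lemma alg (R : realFieldType) m (c b v w dd : 'I_m -> R) (S1 S2 eta : R) :
  (forall a, 0 < c a) -> \sum_a w a = 0 ->
  (forall a, dd a = (c a)^-1 * (v a - S1) - (2 * c a)^-1 * (b a * w a ^+ 2 - S2)
                    - eta * w a) ->
  2^-1 * \sum_a (b a * w a * w a ^+ 2 + c a * (2 * w a * dd a))
  = \sum_a (w a * v a - eta * c a * w a ^+ 2).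
Proof.
move=> cp sw hd.
have E : forall a, b a * w a * w a ^+ 2 + c a * (2 * w a * dd a) =
   2 * (w a * v a - eta * c a * w a ^+ 2) + (S2 - 2 * S1) * w a.
  move=> a; rewrite hd; have := cp a; move: (c a) => ca ca0.
  field; by rewrite lt0r_neq0.
under eq_bigr do rewrite E.
rewrite big_split /= -mulr_sumr -mulr_sumr sw mulr0 addr0 mulrA mulVf ?mul1r //.
Qed.

Lemma term_bound (R : realFieldType) (w v c eta c0 V : R) :
  0 < eta -> 0 < c0 -> c0 <= c -> `|v| <= V ->
  w * v - eta * c * w ^+ 2 <= V ^+ 2 / (4 * eta * c0).
Proof.
move=> e0 c00 cc vV.
have c0' : 0 < c by apply: lt_le_trans cc.
have q0 : 0 < eta * c by apply: mulr_gt0.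
have h1 : w * v - eta * c * w ^+ 2 <= v ^+ 2 / (4 * (eta * c)).
  rewrite ler_pdivlMr; last by apply: mulr_gt0.
  have := sqr_ge0 (v - 2 * (eta * c) * w); nra.
apply: (le_trans h1).
have hv : v ^+ 2 <= V ^+ 2.
  rewrite -real_normK ?num_real // ; apply: lerXn2r => //; rewrite ?nnegrE //.
  exact: le_trans vV.
apply: ler_pM => //.
- exact: sqr_ge0.
- by rewrite invr_ge0 mulr_ge0 // ltW.
rewrite lef_pV2 ?posrE; last 2 first.
- by rewrite !mulr_gt0.
- by rewrite !mulr_gt0.
by rewrite mulrA ler_pM2l ?mulr_gt0.
Qed.

Lemma dir_bound (R : realType) m (U : set 'rV[R]_m) (Phi : 'rV[R]_m -> R)
  (k : R) p v :
  open U -> U p ->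
  (forall q r, U q -> U r -> `|Phi q - Phi r| <= k * `|q - r|) ->
  derivable Phi p v -> `|'D_v Phi p| <= k * `|v|.
Proof.
move=> oU Up Hk dv.
have c0 : {for 0, continuous (fun h : R => h *: v + p)}.
  apply: continuousD; last exact: cst_continuous.
  apply: continuousZl; exact: cvg_id.
have c1 := (continuous_withinNx _ _).1 c0.
rewrite /= scale0r add0r in c1.
have nU : \forall h \near 0^', U (h *: v + p).
  exact: c1 U (open_nbhs_nbhs (conj oU Up)).
apply: (cvgr_to_le (cvg_norm dv)).
near=> h.
have hn0 : h != 0 by near: h; exact: nbhs_dnbhs_neq.
have Uh : U (h *: v + p) by near: h; exact: nU.
rewrite /= normrZ normrV ?unitfE ?normr_eq0 //.
rewrite ler_pdivrMl ?normr_gt0 //.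
have := Hk _ _ Uh Up; rewrite addrK normrZ.
by rewrite mulrCA.
Unshelve. all: by end_near.
Qed.

Lemma vel_sum0 (R : realType) m (x : R -> 'rV[R]_m) t : 0 < t ->
  (forall s, 0 < s -> \sum_(a < m) Defs.coord x a s = 1) ->
  (forall a, derivable (Defs.coord x a) t 1) -> \sum_(a < m) vel x a t = 0.
Proof.
move=> t0 hs hd.
have H : is_derive t 1 (\sum_(a < m) Defs.coord x a) (\sum_(a < m) vel x a t).
  apply: is_derive_sum => a; apply: DeriveDef; first exact: hd.
  by rewrite /vel derive1E.
have N : \forall s \near t, (\sum_(a < m) Defs.coord x a) s = cst (1 : R) s.
  near=> s; rewrite fct_sumE /=; apply: hs.
  near: s; exact: lt_nbhsr.
have H2 := near_eq_is_derive N H.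
by rewrite -(@derive_val _ _ _ _ _ _ _ H2) derive_cst.
Unshelve. all: by end_near.
Qed.

Theorem lemma3p3 (R : realType) (n : nat) (theta : R -> R)
  (Phi : 'rV[R]_(n.+1) -> R) (eta : R) (x : R -> 'rV[R]_(n.+1)) :
  (1 <= n)%N ->
  is_kernel theta ->
  (exists U : set 'rV[R]_(n.+1),
      open U /\ simplex n.+1 `<=` U /\ smooth_on U Phi /\
      [lipschitz Phi p | p in U]) ->
  0 < eta ->
  ID_interior_solution theta Phi eta x ->
  exists M : R, forall t : R, 0 <= t ->
    derivable (kinetic theta x) t 1 /\ derive1 (kinetic theta x) t <= M.
Proof.
move=> n1 hk [U [oU [sU [smU lipU]]]] eta0 sol.
have [k Hk] : exists k : R, k.-lipschitz_on Phi (globally (U `*` U)).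
  case: lipU => M [_ HM]; exists (M + 1); apply: HM.
  by rewrite ltrDl ltr01.
have HL : forall q r, U q -> U r -> `|Phi q - Phi r| <= k * `|q - r|.
  by move=> q r Uq Ur; exact: (Hk (q, r)).
have hk' := hk; case: hk' => [Hd [_ [H2 H3]]].
set c0 := derive1n 2 theta 1.
have c00 : 0 < c0 by apply: H2; exact: ltr01.
set B := \sum_(a < n.+1) (k * `|evec R a|) ^+ 2 / (4 * eta * c0).
exists (Num.max B (derive1 (kinetic theta x) 0)).
move=> t t0.
have [[xpos xsum] [hd hacc]] := sol t t0.
have d2 : forall a, derivable (derive1n 2 theta) (Defs.coord x a t) 1.
  by move=> a; apply: Hd; exact: xpos.
have KD := @kin_derive R n.+1 theta x t d2 hd.
split; first exact: (@ex_derive _ _ _ _ _ _ _ KD).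
have [->|tn0] := eqVneq t 0; first by rewrite le_max lexx orbT.
have tp : 0 < t by rewrite lt_neqAle eq_sym tn0 t0.
rewrite le_max; apply/orP; left.
rewrite derive1E (@derive_val _ _ _ _ _ _ _ KD).
have sw : \sum_(a < n.+1) vel x a t = 0.
  apply: vel_sum0 => //; last by move=> a; exact: (hd a).1.
  by move=> s s0; have [[_ ->] _] := sol s (ltW s0).
pose th2 := fun b => derive1n 2 theta (Defs.coord x b t).
pose th3 := fun b => derive1n 3 theta (Defs.coord x b t).
pose Th2 := (\sum_(b < n.+1) (th2 b)^-1)^-1.
pose v := fun b => pgrad Phi (x t) b.
have th2p : forall a, 0 < th2 a by move=> a; apply: H2; exact: xpos.
have AL := @alg R n.+1 th2 th3 v (fun a => vel x a t) (fun a => acc x a t)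
  (\sum_(b < n.+1) Th2 / th2 b * v b)
  (\sum_(b < n.+1) Th2 / th2 b * th3 b * vel x b t ^+ 2) eta th2p sw.
rewrite /= in AL; rewrite AL; last by move=> a; rewrite hacc.
have Up : U (x t).
  apply: sU; split; [move=> b; exact/ltW/xpos | exact: xsum].
rewrite /B; apply: ler_sum => a _.
apply: (@term_bound R (vel x a t) (v a) (th2 a) eta c0 (k * `|evec R a|) eta0 c00).
- apply: th2_ge => //; first exact: xpos.
  rewrite -xsum (bigD1 a) //= lerDl; apply: sumr_ge0 => b _; exact/ltW/xpos.
- rewrite /v /pgrad. have := (@dir_bound R n.+1 U Phi k (x t) (evec R a) oU Up HL). apply.
  exact: ((smU [::] (x t) Up).2 a).
Qed.
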